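(* Let $(\mathscr{A},{}^{\vee},\varpi)$ be an abelian category with duality in which $2$ is invertible, and let $\mathscr{B}\subseteq\mathscr{A}$ be a full subcategory which is closed under subobjects, quotient objects and finite products in $\mathscr{A}$ and closed under duality ($B\in\mathscr{B}\Rightarrow B^{\vee}\in\mathscr{B}$). Assume that every object of $\mathscr{A}$ has a finite $\mathscr{B}$-filtration and that $\mathscr{A}$ is noetherian. Then: (1) For every object $0\neq M$ of $\mathscr{A}$ there is a unique maximal subobject $\mathfrak{m}(M)\subseteq M$ lying in $\mathscr{B}$, and $\mathfrak{m}(M)\neq 0$; if $M=0$ set $\mathfrak{m}(M)=0$. (2) Let $(M,\varphi)$ be a hermitian space in $\mathscr{A}$ and put $\mathfrak{s}(M)=\mathfrak{m}(M)\cap\mathfrak{m}(M)^{\perp}\subseteq M$. Then $\mathfrak{s}(M)=0$ if and only if $M\in\mathscr{B}$.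
   Context: An abelian category with duality $(\mathscr{A},{}^{\vee},\varpi)$ consists of an abelian category $\mathscr{A}$, an exact contravariant functor ${}^{\vee}:\mathscr{A}^{op}\to\mathscr{A}$ and a natural isomorphism $\varpi:1_{\mathscr{A}}\to {}^{\vee\vee}$. ''$2$ is invertible'' means multiplication by $2$ is surjective on all Hom groups. Objects of $\mathscr{A}$ are called $\mathscr{A}$-modules; a subobject is given by a monomorphism. A $\mathscr{B}$-filtration of an object $N$ is a finite chain of subobjects $0=N_0\subseteq N_1\subseteq\cdots\subseteq N_r=N$ with $N_i/N_{i-1}\in\mathscr{B}$ for all $i$. $\mathscr{A}$ is noetherian if every ascending chain of subobjects of every object stabilizes. A hermitian (symmetric) space is a pair $(M,\varphi)$ with $\varphi:M\to M^{\vee}$ an isomorphism which is symmetric with respect to $\varpi$ (i.e. $\varphi=\varphi^{\vee}\circ\varpi_M$). For a subobject $\mathfrak{i}:L\hookrightarrow M$ of a hermitian space, $L^{\perp}:=\ker(\mathfrak{i}^{\vee}\varphi)\subseteq M$. *)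

(* Defs.v *)
From HB Require Import structures.
From mathcomp Require Import all_boot all_algebra.
Set Implicit Arguments. Unset Strict Implicit. Unset Printing Implicit Defensive.
Import GRing.Theory.
Local Open Scope ring_scope.

Record precat := PreCat {
  Obj :> Type;
  Mor : Obj -> Obj -> zmodType;
  mcomp : forall A B D : Obj, Mor B D -> Mor A B -> Mor A D;
  idm : forall A : Obj, Mor A A }.
Arguments mcomp {p A B D}.
Arguments idm {p}.

Section Cat.
Variable C : precat.

Definition preadditive : Prop :=
  (forall (A B D E : C) (f : Mor A B) (g : Mor B D) (h : Mor D E),
      mcomp h (mcomp g f) = mcomp (mcomp h g) f) /\
  (forall (A B : C) (f : Mor A B), mcomp (idm B) f = f /\ mcomp f (idm A) = f) /\
  (forall (A B D : C) (g : Mor B D) (f1 f2 : Mor A B),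
      mcomp g (f1 + f2) = mcomp g f1 + mcomp g f2) /\
  (forall (A B D : C) (g1 g2 : Mor B D) (f : Mor A B),
      mcomp (g1 + g2) f = mcomp g1 f + mcomp g2 f).

Definition mono (A B : C) (f : Mor A B) : Prop :=
  forall (X : C) (g h : Mor X A), mcomp f g = mcomp f h -> g = h.
Definition epi (A B : C) (f : Mor A B) : Prop :=
  forall (X : C) (g h : Mor B X), mcomp g f = mcomp h f -> g = h.
Definition is_iso (A B : C) (f : Mor A B) : Prop :=
  exists g : Mor B A, mcomp g f = idm A /\ mcomp f g = idm B.

Definition is_zero (Z : C) : Prop :=
  forall A : C, (forall f : Mor Z A, f = 0) /\ (forall f : Mor A Z, f = 0).

Definition is_kernel (A B K : C) (f : Mor A B) (k : Mor K A) : Prop :=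
  mcomp f k = 0 /\
  forall (X : C) (g : Mor X A), mcomp f g = 0 -> exists! u : Mor X K, mcomp k u = g.

Definition is_cokernel (A B Q : C) (f : Mor A B) (q : Mor B Q) : Prop :=
  mcomp q f = 0 /\
  forall (X : C) (g : Mor B X), mcomp g f = 0 -> exists! u : Mor Q X, mcomp u q = g.

Definition is_biproduct (A B P : C) (p1 : Mor P A) (p2 : Mor P B)
    (i1 : Mor A P) (i2 : Mor B P) : Prop :=
  mcomp p1 i1 = idm A /\ mcomp p2 i2 = idm B /\ mcomp p1 i2 = 0 /\ mcomp p2 i1 = 0 /\
  mcomp i1 p1 + mcomp i2 p2 = idm P.

Definition is_pullback (A B M S : C) (f : Mor A M) (g : Mor B M)
    (a : Mor S A) (b : Mor S B) : Prop :=
  mcomp f a = mcomp g b /\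
  forall (X : C) (x : Mor X A) (y : Mor X B), mcomp f x = mcomp g y ->
    exists! u : Mor X S, mcomp a u = x /\ mcomp b u = y.

Definition abelian : Prop :=
  preadditive /\
  (exists Z : C, is_zero Z) /\
  (forall A B : C, exists (P : C) (p1 : Mor P A) (p2 : Mor P B)
      (i1 : Mor A P) (i2 : Mor B P), is_biproduct p1 p2 i1 i2) /\
  (forall (A B : C) (f : Mor A B), exists (K : C) (k : Mor K A), is_kernel f k) /\
  (forall (A B : C) (f : Mor A B), exists (Q : C) (q : Mor B Q), is_cokernel f q) /\
  (forall (A B : C) (f : Mor A B), mono f ->
      exists (Q : C) (q : Mor B Q), is_kernel q f) /\
  (forall (A B : C) (f : Mor A B), epi f ->
      exists (K : C) (k : Mor K A), is_cokernel k f).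

Definition two_invertible : Prop :=
  forall (A B : C) (f : Mor A B), exists g : Mor A B, g *+ 2 = f.

Definition sub_le (L L' M : C) (i : Mor L M) (j : Mor L' M) : Prop :=
  exists u : Mor L L', mcomp j u = i.

Definition noetherian : Prop :=
  forall (M : C) (L : nat -> C) (s : forall n, Mor (L n) M),
    (forall n, mono (s n)) -> (forall n, sub_le (s n) (s n.+1)) ->
    exists N : nat, forall n, (N <= n)%N -> sub_le (s n.+1) (s n).

Definition short_exact (A B E : C) (f : Mor A B) (g : Mor B E) : Prop :=
  is_kernel g f /\ is_cokernel f g.

Record duality := Duality {
  dobj : C -> C;
  dhom : forall A B : C, Mor A B -> Mor (dobj B) (dobj A);
  dnat : forall A : C, Mor A (dobj (dobj A)) }.

Definition is_duality (d : duality) : Prop :=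
  (forall A : C, dhom d (idm A) = idm (dobj d A)) /\
  (forall (A B D : C) (f : Mor A B) (g : Mor B D),
      dhom d (mcomp g f) = mcomp (dhom d f) (dhom d g)) /\
  (forall (A B : C) (f g : Mor A B), dhom d (f + g) = dhom d f + dhom d g) /\
  (forall (A B E : C) (f : Mor A B) (g : Mor B E),
      short_exact f g -> short_exact (dhom d g) (dhom d f)) /\
  (forall A : C, is_iso (dnat d A)) /\
  (forall (A B : C) (f : Mor A B),
      mcomp (dhom d (dhom d f)) (dnat d A) = mcomp (dnat d B) f).

(* B full subcategory closed under subobjects, quotients, finite products
   (including the empty product = zero objects) and duality *)
Definition B_closed (d : duality) (PB : C -> Prop) : Prop :=
  (forall (L M : C) (i : Mor L M), mono i -> PB M -> PB L) /\
  (forall (M Q : C) (q : Mor M Q), epi q -> PB M -> PB Q) /\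
  (forall Z : C, is_zero Z -> PB Z) /\
  (forall (A B P : C) (p1 : Mor P A) (p2 : Mor P B) (i1 : Mor A P) (i2 : Mor B P),
      is_biproduct p1 p2 i1 i2 -> PB A -> PB B -> PB P) /\
  (forall A : C, PB A -> PB (dobj d A)).

Definition has_B_filtration (PB : C -> Prop) (N : C) : Prop :=
  exists (r : nat) (F : nat -> C) (j : forall i, Mor (F i) (F i.+1)),
    is_zero (F 0%N) /\
    (exists e : Mor (F r) N, is_iso e) /\
    forall i, (i < r)%N ->
      mono (j i) /\ exists (Q : C) (q : Mor (F i.+1) Q), is_cokernel (j i) q /\ PB Q.

Definition hermitian_space (d : duality) (M : C) (phi : Mor M (dobj d M)) : Prop :=
  is_iso phi /\ phi = mcomp (dhom d phi) (dnat d M).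

Definition maxB (PB : C -> Prop) (L M : C) (m : Mor L M) : Prop :=
  mono m /\ PB L /\
  forall (L' : C) (i : Mor L' M), mono i -> PB L' -> sub_le m i -> sub_le i m.

End Cat.

(* Main.v *)
Set Warnings "-notation-overridden -ambiguous-paths".
Require Import Defs.
From HB Require Import structures.
From mathcomp Require Import all_boot all_algebra.
From Stdlib Require Import Classical ClassicalEpsilon.
Set Implicit Arguments. Unset Strict Implicit. Unset Printing Implicit Defensive.
Import GRing.Theory.
Local Open Scope ring_scope.
Set Warnings "-notation-overridden -ambiguous-paths".

Lemma cA (C : precat) (pre : preadditive C) (A B D E : C) (f : Mor A B) (g : Mor B D) (h : Mor D E) :
  mcomp h (mcomp g f) = mcomp (mcomp h g) f.
Proof. by case: pre => H _; apply: H. Qed.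
Lemma c1l (C : precat) (pre : preadditive C) (A B : C) (f : Mor A B) : mcomp (idm B) f = f.
Proof. by case: pre => _ [H _]; case: (H _ _ f). Qed.
Lemma c1r (C : precat) (pre : preadditive C) (A B : C) (f : Mor A B) : mcomp f (idm A) = f.
Proof. by case: pre => _ [H _]; case: (H _ _ f). Qed.
Lemma cDr (C : precat) (pre : preadditive C) (A B D : C) (g : Mor B D) (f1 f2 : Mor A B) :
  mcomp g (f1 + f2) = mcomp g f1 + mcomp g f2.
Proof. by case: pre => _ [_ [H _]]; apply: H. Qed.
Lemma cDl (C : precat) (pre : preadditive C) (A B D : C) (g1 g2 : Mor B D) (f : Mor A B) :
  mcomp (g1 + g2) f = mcomp g1 f + mcomp g2 f.
Proof. by case: pre => _ [_ [_ H]]; apply: H. Qed.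
Lemma c0r (C : precat) (pre : preadditive C) (A B D : C) (g : Mor B D) :
  mcomp g (0 : Mor A B) = 0.
Proof.
have h := cDr pre g (0 : Mor A B) 0; rewrite addr0 in h.
by have := congr1 (fun y => y - mcomp g (0 : Mor A B)) h; rewrite /= subrr addrK => <-.
Qed.
Lemma c0l (C : precat) (pre : preadditive C) (A B D : C) (f : Mor A B) :
  mcomp (0 : Mor B D) f = 0.
Proof.
have h := cDl pre (0 : Mor B D) 0 f; rewrite addr0 in h.
by have := congr1 (fun y => y - mcomp (0 : Mor B D) f) h; rewrite /= subrr addrK => <-.
Qed.
Lemma cBr (C : precat) (pre : preadditive C) (A B D : C) (g : Mor B D) (f1 f2 : Mor A B) :
  mcomp g (f1 - f2) = mcomp g f1 - mcomp g f2.
Proof.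
have hN : mcomp g (- f2) = - mcomp g f2.
  by apply: (addrI (mcomp g f2)); rewrite -cDr // !subrr c0r.
by rewrite cDr // hN.
Qed.
Lemma cBl (C : precat) (pre : preadditive C) (A B D : C) (g1 g2 : Mor B D) (f : Mor A B) :
  mcomp (g1 - g2) f = mcomp g1 f - mcomp g2 f.
Proof.
have hN : mcomp (- g2) f = - mcomp g2 f.
  by apply: (addrI (mcomp g2 f)); rewrite -cDl // !subrr c0l.
by rewrite cDl // hN.
Qed.
Lemma mono0 (C : precat) (pre : preadditive C) (A B : C) (f : Mor A B) :
  (forall (X : C) (g : Mor X A), mcomp f g = 0 -> g = 0) -> mono f.
Proof.
move=> H X g h e; apply/eqP; rewrite -subr_eq0; apply/eqP; apply: H.
by rewrite cBr // e subrr.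
Qed.
Lemma mono_0 (C : precat) (pre : preadditive C) (A B X : C) (f : Mor A B) (g : Mor X A) :
  mono f -> mcomp f g = 0 -> g = 0.
Proof. by move=> H e; apply: H; rewrite e c0r. Qed.
Lemma epi0 (C : precat) (pre : preadditive C) (A B : C) (f : Mor A B) :
  (forall (X : C) (g : Mor B X), mcomp g f = 0 -> g = 0) -> epi f.
Proof.
move=> H X g h e; apply/eqP; rewrite -subr_eq0; apply/eqP; apply: H.
by rewrite cBl // e subrr.
Qed.
Lemma epi_0 (C : precat) (pre : preadditive C) (A B X : C) (f : Mor A B) (g : Mor B X) :
  epi f -> mcomp g f = 0 -> g = 0.
Proof. by move=> H e; apply: H; rewrite e c0l. Qed.
Lemma zero_from (C : precat) (Z A : C) (f : Mor Z A) : is_zero Z -> f = 0.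
Proof. by move=> H; case: (H A) => H1 _; apply: H1. Qed.
Lemma zero_to (C : precat) (Z A : C) (f : Mor A Z) : is_zero Z -> f = 0.
Proof. by move=> H; case: (H A) => _ H1; apply: H1. Qed.
Lemma id0_zero (C : precat) (pre : preadditive C) (A : C) : idm A = 0 -> is_zero A.
Proof.
move=> e X; split=> f.
  by rewrite -(c1r pre f) e c0r.
by rewrite -(c1l pre f) e c0l.
Qed.
Lemma mono_zero (C : precat) (pre : preadditive C) (A B : C) (f : Mor A B) :
  mono f -> f = 0 -> is_zero A.
Proof.
move=> H e; apply: (id0_zero pre); apply: H; by rewrite c1r // c0r // e.
Qed.
Lemma iso_mono (C : precat) (pre : preadditive C) (A B : C) (f : Mor A B) : is_iso f -> mono f.
Proof.
case=> g [e1 e2] X x y e.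
by rewrite -(c1l pre x) -(c1l pre y) -e1 -!cA // e.
Qed.
Lemma iso_epi (C : precat) (pre : preadditive C) (A B : C) (f : Mor A B) : is_iso f -> epi f.
Proof.
case=> g [e1 e2] X x y e.
by rewrite -(c1r pre x) -(c1r pre y) -e2 !cA // e.
Qed.
Lemma mono_comp (C : precat) (pre : preadditive C) (A B D : C) (f : Mor A B) (g : Mor B D) :
  mono g -> mono f -> mono (mcomp g f).
Proof. by move=> Hg Hf X x y e; apply: Hf; apply: Hg; rewrite !cA. Qed.
Lemma kernel_mono (C : precat) (pre : preadditive C) (A B K : C) (f : Mor A B) (k : Mor K A) :
  is_kernel f k -> mono k.
Proof.
case=> e0 H X g h e.
have [|u [_ Hu]] := H X (mcomp k g); first by rewrite cA // e0 c0l.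
by rewrite -(Hu g) // (Hu h).
Qed.
Lemma coker_epi (C : precat) (pre : preadditive C) (A B Q : C) (f : Mor A B) (q : Mor B Q) :
  is_cokernel f q -> epi q.
Proof.
case=> e0 H X g h e.
have [|u [_ Hu]] := H X (mcomp g q); first by rewrite -cA // e0 c0r.
by rewrite -(Hu g) // (Hu h).
Qed.
Lemma sub_le_trans (C : precat) (pre : preadditive C) (A B D M : C)
  (i : Mor A M) (j : Mor B M) (k : Mor D M) : sub_le i j -> sub_le j k -> sub_le i k.
Proof. by case=> u eu [v ev]; exists (mcomp v u); rewrite cA // ev. Qed.

Lemma dhom0 (C : precat) (d : duality C) (Hd : is_duality d) (A B : C) :
  dhom d (0 : Mor A B) = 0.
Proof.
case: Hd => _ [_ [Hadd _]].
have h := Hadd _ _ (0 : Mor A B) 0; rewrite addr0 in h.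
by have := congr1 (fun y => y - dhom d (0 : Mor A B)) h; rewrite /= subrr addrK => <-.
Qed.

Lemma dual_mono_epi (C : precat) (pre : preadditive C)
  (cokers : forall (A B : C) (f : Mor A B), exists (Q : C) (q : Mor B Q), is_cokernel f q)
  (d : duality C) (Hd : is_duality d) (A B : C) (f : Mor A B) :
  mono (dhom d f) -> epi f.
Proof.
move=> Hm.
have [Q [q [qf Hq]]] := cokers _ _ f.
have Hd' := Hd; case: Hd' => _ [Hcomp [_ [_ [Hiso Hnat]]]].
have h1 : dhom d q = 0.
  apply: (mono_0 pre Hm); by rewrite -Hcomp qf dhom0.
have h2 : mcomp (dnat d Q) q = 0 by rewrite -Hnat h1 dhom0 // c0l.
have h3 : q = 0 by apply: (mono_0 pre (iso_mono pre (Hiso Q))).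
apply: (epi0 pre) => X g gf.
have [u [uq _]] := Hq X g gf.
by rewrite -uq h3 c0r.
Qed.

Lemma image_fact (C : precat) (pre : preadditive C)
  (kers : forall (A B : C) (f : Mor A B), exists (K : C) (k : Mor K A), is_kernel f k)
  (cokers : forall (A B : C) (f : Mor A B), exists (Q : C) (q : Mor B Q), is_cokernel f q)
  (monok : forall (A B : C) (f : Mor A B), mono f -> exists (Q : C) (q : Mor B Q), is_kernel q f)
  (A M : C) (f : Mor A M) :
  exists (I : C) (e : Mor A I) (k : Mor I M), epi e /\ mono k /\ mcomp k e = f.
Proof.
have [Q [q Hq]] := cokers _ _ f.
have [I [k Hk]] := kers _ _ q.
have kmono := kernel_mono pre Hk.
case: (Hk) => qk0 Hk'.
have [e [ke _]] := Hk' _ f Hq.1.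
exists I, e, k; split; last by split.
apply: (epi0 pre) => X g ge0.
have [K [m0 Hm0]] := kers _ _ g.
case: (Hm0) => gm0 Hm0'.
have [e' [ee' _]] := Hm0' _ e ge0.
have hmono : mono (mcomp k m0) := mono_comp pre kmono (kernel_mono pre Hm0).
have [R [r [rkm Hr]]] := monok _ _ _ hmono.
have rf0 : mcomp r f = 0.
  by rewrite -ke -ee' (cA pre e' m0 k) (cA pre e' (mcomp k m0) r) rkm c0l.
have [t [tq _]] := Hq.2 _ r rf0.
have rk0 : mcomp r k = 0 by rewrite -tq -cA // qk0 c0r.
have [v [vk _]] := Hr _ k rk0.
have hv : mcomp m0 v = idm I.
  by apply: kmono; rewrite c1r // cA.
by rewrite -(c1r pre g) -hv cA // gm0 c0l.
Qed.

Lemma sum_sub (C : precat) (pre : preadditive C)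
  (kers : forall (A B : C) (f : Mor A B), exists (K : C) (k : Mor K A), is_kernel f k)
  (cokers : forall (A B : C) (f : Mor A B), exists (Q : C) (q : Mor B Q), is_cokernel f q)
  (monok : forall (A B : C) (f : Mor A B), mono f -> exists (Q : C) (q : Mor B Q), is_kernel q f)
  (bip : forall A B : C, exists (P : C) (p1 : Mor P A) (p2 : Mor P B)
      (i1 : Mor A P) (i2 : Mor B P), is_biproduct p1 p2 i1 i2)
  (d : duality C) (PB : C -> Prop) (Bcl : B_closed d PB)
  (L L' M : C) (m : Mor L M) (m' : Mor L' M) :
  PB L -> PB L' ->
  exists (I : C) (s : Mor I M), mono s /\ PB I /\ sub_le m s /\ sub_le m' s.
Proof.
case: Bcl => _ [Bquo [_ [Bprod _]]] PL PL'.
have [P [p1 [p2 [i1 [i2 Hb]]]]] := bip L L'.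
have PP := Bprod _ _ _ _ _ _ _ Hb PL PL'.
case: (Hb) => e11 [e22 [e12 [e21 _]]].
have [I [e [k [ee [km ke]]]]] := image_fact pre kers cokers monok (mcomp m p1 + mcomp m' p2).
exists I, k; split => //; split; first exact: Bquo _ _ _ ee PP.
split.
  exists (mcomp e i1); by rewrite cA // ke cDl // -!cA // e11 e21 c1r // c0r // addr0.
exists (mcomp e i2); by rewrite cA // ke cDl // -!cA // e22 e12 c1r // c0r // add0r.
Qed.

Lemma filt_sub (C : precat) (pre : preadditive C)
  (d : duality C) (PB : C -> Prop) (Bcl : B_closed d PB) (N : C) :
  has_B_filtration PB N -> ~ is_zero N ->
  exists (X : C) (x : Mor X N), mono x /\ PB X /\ ~ is_zero X.
Proof.
case: Bcl => _ [Bquo _].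
case=> r [F [j [F0 [[e [g [ge eg]]] Hj]]]] nzN.
have nzr : ~ is_zero (F r).
  move=> zr; apply: nzN; apply: (id0_zero pre).
  by rewrite -eg (zero_to g zr) c0r.
suff H : forall n, (n <= r)%N -> ~ is_zero (F n) ->
  exists (X : C) (x : Mor X (F n)), mono x /\ PB X /\ ~ is_zero X.
  have [X [x [xm [PX nzX]]]] := H r (leqnn r) nzr.
  exists X, (mcomp e x); split => //.
  apply: (mono_comp pre) => //; apply: (iso_mono pre); by exists g.
elim=> [|n IH] lenr nzn; first by [].
have [jm [Q [q [[qj Hq] PQ]]]] := Hj n lenr.
case: (classic (is_zero (F n))) => zn.
  have [|u [uq _]] := Hq _ (idm (F n.+1)).
    by rewrite c1l // (zero_from (j n) zn).
  have qu : mcomp q u = idm Q.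
    apply: (coker_epi pre (conj qj Hq)); by rewrite -cA // uq c1r // c1l.
  exists (F n.+1), (idm (F n.+1)); split.
    by apply: (iso_mono pre); exists (idm (F n.+1)); rewrite c1l.
  split => //; apply: (Bquo _ _ u) => //.
  by apply: (iso_epi pre); exists q.
have [X [x [xm [PX nzX]]]] := IH (ltnW lenr) zn.
exists X, (mcomp (j n) x); split => //; exact: mono_comp.
Qed.

Record subB (C : precat) (PB : C -> Prop) (M N0 : C) (n0 : Mor N0 M) := SubB {
  sL : C; sm : Mor sL M; sP : mono sm /\ PB sL /\ sub_le n0 sm }.

Lemma max_exists (C : precat) (pre : preadditive C) (noeth : noetherian C)
  (PB : C -> Prop) (M N0 : C) (n0 : Mor N0 M) :
  mono n0 -> PB N0 ->
  exists (L : C) (m : Mor L M), maxB PB m /\ sub_le n0 m.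
Proof.
move=> n0m PN0.
apply: NNPP => H.
have step : forall t : subB PB n0,
  exists t' : subB PB n0, sub_le (sm t) (sm t') /\ ~ sub_le (sm t') (sm t).
  move=> [L m [mm [PL le0]]] /=.
  apply: NNPP => Hno; apply: H; exists L, m; split => //.
  split => //; split => // L' i im PL' le.
  apply: NNPP => nle; apply: Hno.
  exists (SubB (conj im (conj PL' (sub_le_trans pre le0 le)))) => /=; by split.
pose next t := proj1_sig (constructive_indefinite_description _ (step t)).
have Hnext t : sub_le (sm t) (sm (next t)) /\ ~ sub_le (sm (next t)) (sm t).
  exact: (proj2_sig (constructive_indefinite_description _ (step t))).
have t0 : subB PB n0.
  apply: (SubB (conj n0m (conj PN0 _))); exists (idm N0); exact: c1r.
pose s n := iter n next t0.
have [K HK] := noeth M (fun n => sL (s n)) (fun n => sm (s n))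
  (fun n => (sP (s n)).1) (fun n => (Hnext (s n)).1).
exact: ((Hnext (s K)).2 (HK K (leqnn K))).
Qed.

Unset Implicit Arguments.
Theorem lemma2p5 (C : precat) (d : duality C) (PB : C -> Prop) :
  abelian C -> is_duality d -> two_invertible C -> B_closed d PB ->
  (forall N : C, has_B_filtration PB N) -> noetherian C ->
  (* (1) *)
  (forall M : C, ~ is_zero M ->
     exists (L : C) (m : Mor L M),
       maxB PB m /\ ~ is_zero L /\
       forall (L' : C) (m' : Mor L' M), maxB PB m' -> sub_le m m' /\ sub_le m' m) /\
  (* (2) *)
  (forall (M : C) (phi : Mor M (dobj d M)), hermitian_space phi ->
     forall (L : C) (m : Mor L M), maxB PB m ->
     forall (P : C) (k : Mor P M), is_kernel (mcomp (dhom d m) phi) k ->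
     forall (S : C) (a : Mor S L) (b : Mor S P), is_pullback m k a b ->
       (is_zero S <-> PB M)).
Proof.
move=> [pre [[Z HZ] [bip [kers [cokers [monok epik]]]]]] Hd _ Bcl filt noeth.
split.
  move=> M nzM.
  have [N0 [n0 [n0m [PN0 nzN0]]]] := filt_sub pre Bcl (filt M) nzM.
  have [L [m [Hmax le0]]] := max_exists pre noeth n0m PN0.
  exists L, m; split => //; split.
    move=> zL; apply: nzN0; case: le0 => u eu.
    apply: (mono_zero pre n0m); by rewrite -eu (zero_to u zL) c0r.
  move=> L' m' Hmax'.
  case: (Hmax) => mm [PL Hm]; case: (Hmax') => mm' [PL' Hm'].
  have [I [s [sm [PI [le1 le2]]]]] := sum_sub pre kers cokers monok bip Bcl m m' PL PL'.
  have h1 := Hm _ s sm PI le1; have h2 := Hm' _ s sm PI le2.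
  split.
    exact: (sub_le_trans pre le1 h2).
  exact: (sub_le_trans pre le2 h1).
move=> M phi [phiiso phisym] L m [mm [PL Hm]] P k Hker S a b [ab Hpb].
have Hker' := Hker; case: Hker' => fk Hk.
have km := kernel_mono pre Hker.
have Hd' := Hd; case: Hd' => Hid [Hcomp [_ [_ [Hiso Hnat]]]].
have Bcl' := Bcl; case: Bcl' => _ [Bquo [_ [Bprod _]]].
set f := mcomp (dhom d m) phi in Hker fk Hk.
split.
  move=> zS.
  have psim : mono (mcomp f m).
    apply: (mono0 pre) => X g e.
    have [|y [ky _]] := Hk X (mcomp m g); first by rewrite cA.
    have [u [[au _] _]] := Hpb X g y (esym ky).
    by rewrite -au (zero_to u zS) c0r.
  have zP : is_zero P.
    apply: NNPP => nzP.
    have [N [j [jm [PN nzN]]]] := filt_sub pre Bcl (filt P) nzP.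
    have [Pr [p1 [p2 [i1 [i2 Hb]]]]] := bip L N.
    have PPr := Bprod _ _ _ _ _ _ _ Hb PL PN.
    case: (Hb) => e11 [e22 [e12 [e21 eid]]].
    have kjm : mono (mcomp k j) := mono_comp pre km jm.
    pose h := mcomp m p1 + mcomp (mcomp k j) p2.
    have fh : mcomp f h = mcomp (mcomp f m) p1.
      by rewrite /h cDr // !cA // fk !c0l // addr0.
    have hm : mono h.
      apply: (mono0 pre) => X g e.
      have e1 : mcomp p1 g = 0.
        apply: (mono_0 pre psim); by rewrite cA // -fh -cA // e c0r.
      have e2 : mcomp p2 g = 0.
        apply: (mono_0 pre kjm); move: e; by rewrite /h cDl // -!cA // e1 c0r // add0r.
      by rewrite -(c1l pre g) -eid cDl // -!cA // e1 e2 !c0r // addr0.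
    have hi1 : mcomp h i1 = m by rewrite /h cDl // -!cA // e11 e21 !c0r // c1r // addr0.
    have [u eu] := Hm _ h hm PPr (ex_intro _ i1 hi1).
    have hi2 : mcomp h i2 = mcomp k j by rewrite /h cDl // -!cA // e12 e22 c1r // c0r // add0r.
    have ui2 : mcomp u i2 = 0.
      apply: (mono_0 pre psim); by rewrite -cA // (cA pre i2 u m) eu hi2 cA // fk c0l.
    apply: nzN; apply: (mono_zero pre kjm); by rewrite -hi2 -eu -cA // ui2 c0r.
  have fm : mono f.
    apply: (mono0 pre) => X g e.
    have [y [ky _]] := Hk X g e.
    by rewrite -ky (zero_to y zP) c0r.
  case: (phiiso) => ph' [e1 e2].
  have dm : mono (dhom d m).
    have -> : dhom d m = mcomp f ph' by rewrite /f -cA // e2 c1r.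
    apply: (mono_comp pre fm); apply: (iso_mono pre); by exists phi.
  have me := dual_mono_epi pre cokers Hd dm.
  exact: (Bquo _ _ _ me PL).
move=> PM.
have idm_m : mono (idm M) by apply: (iso_mono pre); exists (idm M); rewrite c1l.
have [u mu] := Hm _ (idm M) idm_m PM (ex_intro _ m (c1l pre m)).
have k0 : k = 0.
  apply: (mono_0 pre (iso_mono pre phiiso)).
  have hdu : mcomp (dhom d u) (dhom d m) = idm _ by rewrite -Hcomp mu Hid.
  by rewrite -(c1l pre (mcomp phi k)) -hdu -cA // (cA pre k phi (dhom d m)) fk c0r.
have a0 : a = 0 by apply: (mono_0 pre mm); rewrite ab k0 c0l.
have b0 : b = 0 by apply: (mono_0 pre km); rewrite -ab a0 c0r.
apply: (id0_zero pre).
have [v [_ Hv]] := Hpb S a b ab.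
rewrite -(Hv (idm S)); last by rewrite !c1r.
by apply: Hv; rewrite a0 b0 !c0r.
Qed.
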